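(* Let $H\subset\mathrm{PGL}(2,\mathbb{C})=\mathrm{Aut}(\mathbb{P}^1)$ be a finite subgroup and let $\Lambda\subset\mathbb{P}^1$ be a finite subset. The following are equivalent: (1) $\Lambda$ is non-empty and $H$-invariant; (2) there exists an $H$-equivariant morphism $\delta\colon\mathbb{P}^1\to\mathbb{P}^1$ (i.e. $\delta\circ h=h\circ\delta$ for all $h\in H$) such that $\Lambda=\{q\in\mathbb{P}^1\mid\delta(q)=q\}$.
   Context: $\mathrm{PGL}(2,\mathbb{C})$ acts on $\mathbb{P}^1$ in the standard way; morphisms are algebraic. *)

(* Defs.v *)
From HB Require Import structures.
From mathcomp Require Import all_boot all_order all_algebra.
Set Implicit Arguments. Unset Strict Implicit. Unset Printing Implicit Defensive.
Import GRing.Theory.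
Local Open Scope ring_scope.

Section P1.
Variable F : closedFieldType.

(* Points of P^1: [Some x] = [x : 1], [None] = [1 : 0] (the point at infinity). *)
Definition P1 := option F.

Definition coords (p : P1) : F * F := if p is Some x then (x, 1) else (1, 0).

Definition proj (v : F * F) : P1 := if v.2 == 0 then None else Some (v.1 / v.2).

(* A binary form of degree d, encoded by the univariate polynomial of its
   coefficients: hev d p (x,y) = sum_{i<=d} p_i x^i y^(d-i). *)
Definition hev (d : nat) (p : {poly F}) (v : F * F) : F :=
  \sum_(i < d.+1) p`_i * v.1 ^+ i * v.2 ^+ (d - i).

(* Algebraic morphisms P^1 -> P^1: [x : y] |-> [P(x,y) : Q(x,y)] with P, Q
   binary forms of the same degree d without common nontrivial zero. *)
Definition is_P1_morphism (f : P1 -> P1) : Prop :=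
  exists (d : nat) (p q : {poly F}),
    [/\ (size p <= d.+1)%N, (size q <= d.+1)%N,
        (forall v : F * F, v != (0, 0) -> (hev d p v, hev d q v) != (0, 0)) &
        forall z : P1, f z = proj (hev d p (coords z), hev d q (coords z))].

Definition mob (A : 'M[F]_2) (z : P1) : P1 :=
  let c := coords z in
  proj (A ord0 ord0 * c.1 + A ord0 ord_max * c.2,
        A ord_max ord0 * c.1 + A ord_max ord_max * c.2).

Definition pgl_eq (A B : 'M[F]_2) : Prop := exists c : F, c != 0 /\ A = c *: B.

(* A finite subgroup of PGL(2,F), given by a finite list of representatives
   in GL(2,F): it contains the identity and is closed under products and
   inverses (modulo scalars). *)
Definition finite_subgroup_PGL2 (H : seq 'M[F]_2) : Prop :=
  [/\ (forall A, A \in H -> A \in unitmx),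
      (exists2 C, C \in H & pgl_eq 1%:M C),
      (forall A B, A \in H -> B \in H -> exists2 C, C \in H & pgl_eq (A *m B) C) &
      (forall A, A \in H -> exists2 C, C \in H & pgl_eq (invmx A) C)].

End P1.

(* Main.v *)
Require Import Defs.
From HB Require Import structures.
From mathcomp Require Import all_boot all_order all_algebra.
From mathcomp Require Import ring.
Import GRing.Theory.
Local Open Scope ring_scope.

Set Implicit Arguments. Unset Strict Implicit. Unset Printing Implicit Defensive.

Section Aux.
Variable F : closedFieldType.
Implicit Types (v w : F * F) (z : P1 F) (A : 'M[F]_2).

Definition det2 v w := v.1 * w.2 - v.2 * w.1.
Definition scl (k : F) v := (k * v.1, k * v.2).
Definition tk v := if v.2 == 0 then v.1 else v.2.
Definition matvec A v := (A ord0 ord0 * v.1 + A ord0 ord_max * v.2,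
        A ord_max ord0 * v.1 + A ord_max ord_max * v.2).
Definition dA A := A ord0 ord0 * A ord_max ord_max - A ord0 ord_max * A ord_max ord0.

Lemma nzP v : (v != (0,0)) = (v.1 != 0) || (v.2 != 0).
Proof. by case: v => a b; rewrite xpair_eqE negb_and. Qed.

Lemma coords_nz z : coords z != (0,0).
Proof. by rewrite nzP; case: z => [x|] /=; rewrite oner_eq0 ?orbT. Qed.

Lemma proj_coords z : proj (coords z) = z.
Proof. by case: z => [x|]; rewrite /proj /= ?oner_eq0 ?divr1 ?eqxx. Qed.

Lemma tk_nz v : v != (0,0) -> tk v != 0.
Proof. case: v => a b; rewrite nzP /tk /=; case: ifP => [_| /negbT //] /=; by rewrite orbF. Qed.

Lemma coords_proj v : v != (0,0) -> v = scl (tk v) (coords (proj v)).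
Proof.
case: v => a b; rewrite nzP /tk /proj /scl /=; case: ifP => [/eqP -> | /negbT b0] /=.
  by rewrite mulr1 mulr0.
by rewrite mulr1 mulrC divfK.
Qed.

Lemma proj_scl k v : k != 0 -> proj (scl k v) = proj v.
Proof.
move=> k0; rewrite /proj /scl /= mulf_eq0 (negbTE k0) /=.
case: eqP => // /eqP b0; congr Some; rewrite invfM mulrACA divff // mul1r //.
Qed.

Lemma det2_scll k v w : det2 (scl k v) w = k * det2 v w.
Proof. rewrite /det2 /scl /=; ring. Qed.
Lemma det2_sclr k v w : det2 v (scl k w) = k * det2 v w.
Proof. rewrite /det2 /scl /=; ring. Qed.
Lemma det2C v w : det2 v w = - det2 w v.
Proof. rewrite /det2; ring. Qed.

Lemma det2_coords z1 z2 : (det2 (coords z1) (coords z2) == 0) = (z1 == z2).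
Proof.
case: z1 => [a|]; case: z2 => [b|]; rewrite /det2 /= ?mulr1 ?mul1r ?mulr0 ?mul0r
  ?subr0 ?sub0r ?oppr_eq0 ?oner_eq0 //.
  by rewrite subr_eq0; apply/eqP/eqP => [-> // | [->] ].
by rewrite !eqxx.
Qed.

Lemma proj_eq v w : v != (0,0) -> w != (0,0) -> (proj v = proj w) <-> det2 v w = 0.
Proof.
move=> v0 w0; rewrite [in det2 _ _](coords_proj v0) [in det2 _ _](coords_proj w0).
rewrite det2_scll det2_sclr; split.
  by move=> ->; apply/eqP; rewrite !mulf_eq0 det2_coords eqxx !orbT.
move/eqP; rewrite !mulf_eq0 (negbTE (tk_nz v0)) (negbTE (tk_nz w0)) /=.
by rewrite det2_coords => /eqP.
Qed.

Lemma mobE A z : mob A z = proj (matvec A (coords z)).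
Proof. by []. Qed.

Lemma matvec_scl A k v : matvec A (scl k v) = scl k (matvec A v).
Proof. rewrite /matvec /scl /=; congr (_,_); ring. Qed.

Lemma det2_matvec A v w : det2 (matvec A v) (matvec A w) = dA A * det2 v w.
Proof. rewrite /det2 /matvec /dA /=; ring. Qed.

Lemma lift00 : lift ord0 ord0 = ord_max :> 'I_2.
Proof. by apply: val_inj. Qed.

Lemma matvec_mul A B v : matvec B (matvec A v) = matvec (B *m A) v.
Proof.
rewrite /matvec /= !mxE !big_ord_recl !big_ord0 !lift00 /=; congr (_,_); ring.
Qed.

Lemma dA_mul A B : dA (B *m A) = dA B * dA A.
Proof. rewrite /dA !mxE !big_ord_recl !big_ord0 !lift00 /=; ring. Qed.

Lemma dA_nz A : A \in unitmx -> dA A != 0.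
Proof.
move=> uA; have := dA_mul A (invmx A); rewrite mulVmx //.
rewrite /dA !mxE /= => h; apply/eqP => h0; move: h; rewrite h0 mulr0 mulr1 subr0 /= ?mulr1n mulr0 => /eqP; rewrite oner_eq0.
by [].
Qed.

Lemma matvec_nz A v : A \in unitmx -> v != (0,0) -> matvec A v != (0,0).
Proof.
move=> uA; apply: contra => /eqP h.
have e : matvec (invmx A *m A) v = v.
  rewrite (mulVmx uA); case: v {h} => a b; rewrite /matvec !mxE /= ?mulr1n ?mulr0n.
  congr (_,_); ring.
by rewrite -e -matvec_mul h /matvec /= !mulr0 !addr0.
Qed.

Lemma mob_inj A : A \in unitmx -> injective (mob A).
Proof.
move=> uA z1 z2; rewrite !mobE => /proj_eq.
rewrite !matvec_nz ?coords_nz // det2_matvec => /(_ isT isT) /eqP.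
by rewrite mulf_eq0 (negbTE (dA_nz uA)) det2_coords => /eqP.
Qed.

End Aux.

Section Forms.
Variable F : closedFieldType.
Implicit Types (v w : F * F) (z : P1 F) (A : 'M[F]_2) (p q : {poly F}).

Definition isForm d (g : F * F -> F) :=
  exists p : {poly F}, (size p <= d.+1)%N /\ forall v, g v = hev d p v.

Lemma hevD d p q v : hev d (p + q) v = hev d p v + hev d q v.
Proof. by rewrite /hev -big_split; apply: eq_bigr => i _; rewrite coefD !mulrDl. Qed.

Lemma hevZ d c p v : hev d (c *: p) v = c * hev d p v.
Proof. rewrite /hev mulr_sumr; apply: eq_bigr => i _; by rewrite coefZ -!mulrA. Qed.

Lemma hev_y d p v : (size p <= d.+1)%N -> hev d.+1 p v = v.2 * hev d p v.
Proof.
move=> sp; rewrite /hev big_ord_recr /= nth_default // mul0r mul0r addr0 mulr_sumr.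
apply: eq_bigr => i _ /=; rewrite (subSn (ltnSE (ltn_ord i))) exprS; ring.
Qed.

Lemma hev_x d p v : hev d.+1 ('X * p) v = v.1 * hev d p v.
Proof.
rewrite /hev big_ord_recl /= coefXM eqxx mul0r mul0r add0r mulr_sumr.
apply: eq_bigr => i _ /=; rewrite coefXM /= subSS /bump /= add1n exprS; ring.
Qed.

Lemma hev_scl d p k v : (size p <= d.+1)%N -> hev d p (scl k v) = k ^+ d * hev d p v.
Proof.
move=> sp; rewrite /hev mulr_sumr; apply: eq_bigr => i _ /=.
rewrite !exprMn.
have -> : k ^+ d = k ^+ i * k ^+ (d - i) by rewrite -exprD subnKC // (ltnSE (ltn_ord i)).
ring.
Qed.

Lemma form_ext d g g' : isForm d g -> (forall v, g v = g' v) -> isForm d g'.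
Proof. by move=> [p [sp e]] e'; exists p; split=> // v; rewrite -e'. Qed.

Lemma form0 d : isForm d (fun _ => 0).
Proof. by exists 0; rewrite size_poly0; split=> // v; rewrite /hev big1 // => i _; rewrite coef0 !mul0r. Qed.

Lemma form1 : isForm 0 (fun _ => 1).
Proof.
exists 1; rewrite size_poly1; split=> // v.
by rewrite /hev big_ord_recl big_ord0 coef1 /= !expr0 !mulr1 addr0.
Qed.

Lemma formD d g h : isForm d g -> isForm d h -> isForm d (fun v => g v + h v).
Proof.
move=> [p [sp ep]] [q [sq eq]]; exists (p + q); split.
  by apply: leq_trans (size_polyD _ _) _; rewrite geq_max sp sq.
by move=> v; rewrite hevD ep eq.
Qed.

Lemma formZ d c g : isForm d g -> isForm d (fun v => c * g v).
Proof.
move=> [p [sp ep]]; exists (c *: p); split.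
  exact: leq_trans (size_scale_leq _ _) _.
by move=> v; rewrite hevZ ep.
Qed.

Lemma formX d g : isForm d g -> isForm d.+1 (fun v => v.1 * g v).
Proof.
move=> [p [sp ep]]; exists ('X * p); split; last by move=> v; rewrite hev_x ep.
apply: leq_trans (size_polyMleq _ _) _; rewrite size_polyX /=; exact: sp.
Qed.

Lemma formY d g : isForm d g -> isForm d.+1 (fun v => v.2 * g v).
Proof.
move=> [p [sp ep]]; exists p; split; first exact: leqW.
by move=> v; rewrite hev_y // ep.
Qed.

Lemma formL d u g : isForm d g -> isForm d.+1 (fun v => det2 v u * g v).
Proof.
move=> fg; apply: (@form_ext _ (fun v => v.1 * (u.2 * g v) + v.2 * ((- u.1) * g v))).
  by apply: formD; apply: formX || apply: formY; apply: formZ.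
by move=> v; rewrite /det2; ring.
Qed.

Lemma form_sum d (T : eqType) (r : seq T) (G : T -> F * F -> F) :
  (forall x, x \in r -> isForm d (G x)) ->
  isForm d (fun v => \sum_(x <- r) G x v).
Proof.
elim: r => [|a r IH] h.
  by apply: (form_ext (form0 d)) => v; rewrite big_nil.
apply: (@form_ext _ (fun v => G a v + \sum_(x <- r) G x v)).
  apply: formD; first by apply: h; rewrite mem_head.
  by apply: IH => x xr; apply: h; rewrite in_cons xr orbT.
by move=> v; rewrite big_cons.
Qed.

Lemma form_prod (T : Type) (r : seq T) (P : pred T) (u : T -> F * F) :
  isForm (count P r) (fun v => \prod_(x <- r | P x) det2 v (u x)).
Proof.
elim: r => [|a r IH] /=.
  by apply: (form_ext form1) => v; rewrite big_nil.
case Pa: (P a) => /=.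
  by apply: (form_ext (formL (u a) IH)) => v; rewrite big_cons Pa.
by apply: (form_ext IH) => v; rewrite big_cons Pa.

Qed.

End Forms.

Section Main.
Variable F : closedFieldType.
Hypothesis charF0 : [pchar F] =i pred0.
Implicit Types (v w : F * F) (z : P1 F) (A : 'M[F]_2) (s : seq (P1 F)).

Lemma natn0 n : (0 < n)%N -> n%:R != 0 :> F.
Proof. by move=> n0; apply/negP => /(natf0_pchar n0) [p]; rewrite charF0. Qed.

Definition Pl s (l : P1 F) v := \prod_(m <- s | m != l) det2 v (coords m).
Definition Dc (g : F * F -> F) s v := \sum_(l <- s) Pl s l v * g (coords l).
Definition D s v := (Dc fst s v, Dc snd s v).
Definition delta s z := proj (D s (coords z)).

Lemma cnt s l : uniq s -> l \in s -> count (fun m => m != l) s = (size s).-1.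
Proof.
move=> us ls; have := count_predC (pred1 l) s.
rewrite count_uniq_mem // ls add1n => <-; by [].
Qed.

Lemma form_Dc g s : uniq s -> isForm (size s).-1 (Dc g s).
Proof.
move=> us; apply: form_sum => l ls; rewrite -(cnt us ls).
apply: (@form_ext _ _ (fun v => g (coords l) * Pl s l v)).
  exact: (formZ (g (coords l)) (form_prod s (fun m => m != l) (@coords F))).
by move=> v; rewrite mulrC.
Qed.

Lemma D_hom s k v : uniq s -> D s (scl k v) = scl (k ^+ (size s).-1) (D s v).
Proof.
move=> us; have [p [sp ep]] := form_Dc fst us; have [q [sq eq]] := form_Dc snd us.
by rewrite /D /scl /= ep eq !hev_scl // -ep -eq.
Qed.

Lemma sum_const_seq (T : Type) (r : seq T) (x : F) : \sum_(i <- r) x = x *+ size r.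
Proof. by elim: r => [|a r IH]; rewrite ?big_nil ?big_cons ?IH ?mulrS. Qed.

Lemma det2_D s v : uniq s ->
  det2 v (D s v) = (\prod_(m <- s) det2 v (coords m)) *+ size s.
Proof.
move=> us; rewrite -(sum_const_seq s) /det2 /D /Dc /= !mulr_sumr -sumrB.
rewrite big_seq [RHS]big_seq.
apply: eq_bigr => l ls; rewrite (bigD1_seq l) //= /Pl /det2; ring.
Qed.

Lemma scl_nz k (u : F * F) : k != 0 -> u != (0,0) -> scl k u != (0,0).
Proof. by move=> k0; rewrite !nzP /scl /= !mulf_eq0 (negbTE k0). Qed.

Lemma D_nz s v : uniq s -> (0 < size s)%N -> v != (0,0) -> D s v != (0,0).
Proof.
move=> us s0 v0.
case: (boolP (has (fun m => det2 v (coords m) == 0) s)).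
  move/hasP => [l ls /eqP hl].
  have pv : proj v = l by have := (proj_eq v0 (coords_nz l)).2 hl; rewrite proj_coords.
  have eD : forall g, Dc g s v = Pl s l v * g (coords l).
    move=> g; rewrite /Dc (bigD1_seq l) //= big1 ?addr0 // => m ml.
    have -> : Pl s m v = 0; last by rewrite mul0r.
    apply/eqP; rewrite prodf_seq_eq0; apply/hasP; exists l => //.
    by rewrite eq_sym ml hl eqxx.
  have -> : D s v = scl (Pl s l v) (coords l) by rewrite /D !eD.
  apply: scl_nz (coords_nz l); rewrite prodf_seq_neq0; apply/allP => m ms.
  apply/implyP => ml; rewrite (coords_proj v0) pv det2_scll mulf_neq0 ?tk_nz //.
  by rewrite det2_coords eq_sym.
rewrite -all_predC => /allP hs.
have p0 : \prod_(m <- s) det2 v (coords m) != 0.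
  by rewrite prodf_seq_neq0; apply/allP => m ms; have := hs m ms.
apply: contraNneq (_ : det2 v (D s v) != 0) => [->|]; first by rewrite /det2 !mulr0 subr0.
by rewrite det2_D // -mulr_natr mulf_neq0 // natn0.
Qed.

Lemma delta_fix s z : uniq s -> (0 < size s)%N -> (delta s z = z <-> z \in s).
Proof.
move=> us s0; rewrite /delta -{2}(proj_coords z).
rewrite (proj_eq (D_nz us s0 (coords_nz z)) (coords_nz z)) det2C.
have -> : (- det2 (coords z) (D s (coords z)) = 0) <-> 
   (\prod_(m <- s) det2 (coords z) (coords m) == 0).
  rewrite det2_D // -mulr_natr; split.
    by move/eqP; rewrite oppr_eq0 mulf_eq0 (negbTE (natn0 s0)) orbF.
  by move/eqP=> ->; rewrite mul0r oppr0.
rewrite prodf_seq_eq0; split.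
  by move/hasP => [m ms]; rewrite det2_coords => /eqP ->.
by move=> zs; apply/hasP; exists z => //=; rewrite det2_coords eqxx.
Qed.


Lemma coords_proj_inv w : w != (0,0) -> coords (proj w) = scl (tk w)^-1 w.
Proof.
move=> w0; have := coords_proj w0; have := tk_nz w0.
move: (tk w) (coords (proj w)) => t [c1 c2] t0 ->.
by rewrite /scl /= !mulrA mulVf // !mul1r.
Qed.

Lemma coords_mob A m : A \in unitmx ->
  coords (mob A m) = scl (tk (matvec A (coords m)))^-1 (matvec A (coords m)).
Proof. by move=> uA; rewrite mobE coords_proj_inv // matvec_nz ?coords_nz. Qed.

Lemma Dc_lin a b s v :
  Dc (fun w => a * w.1 + b * w.2) s v = a * Dc fst s v + b * Dc snd s v.
Proof. rewrite /Dc !mulr_sumr -big_split; apply: eq_bigr => l _ /=; ring. Qed.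

Definition kap A s :=
  (\prod_(m <- s) (tk (matvec A (coords m)))^-1) * dA A ^+ (size s).-1.

Lemma perm_mob A s : A \in unitmx -> uniq s ->
  (forall q, (mob A q \in s) = (q \in s)) -> perm_eq (map (mob A) s) s.
Proof.
move=> uA us hs; have inj := mob_inj uA.
have um : uniq (map (mob A) s) by rewrite map_inj_uniq.
apply: uniq_perm => //.
have [] := @uniq_min_size _ (map (mob A) s) s um; last by [].
  by move=> x /mapP [y ys ->]; rewrite hs.
by rewrite size_map.
Qed.

Lemma Dc_eqv A s g : A \in unitmx -> uniq s -> (forall q, (mob A q \in s) = (q \in s)) ->
  (forall k w, g (scl k w) = k * g w) ->
  forall v, Dc g s (matvec A v) = kap A s * Dc (fun w => g (matvec A w)) s v.
Proof.
move=> uA us hs gl v.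
have inj := mob_inj uA.
have ps : perm_eq s (map (mob A) s) by rewrite perm_sym perm_mob.
have eP : forall l v', Pl s (mob A l) v' =
    \prod_(m <- s | m != l) det2 v' (coords (mob A m)).
  move=> l v'; rewrite /Pl (perm_big _ ps) big_map.
  by apply: eq_bigl => m; rewrite inj_eq.
rewrite /Dc (perm_big _ ps) big_map mulr_sumr big_seq [RHS]big_seq.
apply: eq_bigr => l ls; rewrite eP.
rewrite (eq_bigr (fun m => (tk (matvec A (coords m)))^-1 * (dA A * det2 v (coords m))));
  last by move=> m _; rewrite coords_mob // det2_sclr det2_matvec.
rewrite big_split big_split /= -/(Pl s l v) big_const_seq iter_mulr_1 cnt //.
rewrite coords_mob // gl /kap (bigD1_seq l) //=; ring.
Qed.


Lemma kap_nz A s : A \in unitmx -> kap A s != 0.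
Proof.
move=> uA; rewrite /kap mulf_neq0 ?expf_neq0 ?dA_nz //.
rewrite prodf_seq_neq0; apply/allP => m _ /=.
by rewrite invr_neq0 // tk_nz // matvec_nz ?coords_nz.
Qed.

Lemma D_eqv A s v : A \in unitmx -> uniq s -> (forall q, (mob A q \in s) = (q \in s)) ->
  D s (matvec A v) = scl (kap A s) (matvec A (D s v)).
Proof.
move=> uA us hs; rewrite /D /scl /= !(Dc_eqv uA us hs) //.
by rewrite /matvec /= !Dc_lin.
Qed.

Lemma delta_eqv A s z : A \in unitmx -> uniq s -> (0 < size s)%N ->
  (forall q, (mob A q \in s) = (q \in s)) ->
  delta s (mob A z) = mob A (delta s z).
Proof.
move=> uA us s0 hs; rewrite /delta !mobE.
have w0 := matvec_nz uA (coords_nz z).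
have d0 := D_nz us s0 (coords_nz z).
rewrite coords_proj_inv // D_hom // proj_scl; last by rewrite expf_neq0 // invr_neq0 // tk_nz.
rewrite D_eqv // proj_scl ?kap_nz //.
rewrite coords_proj_inv // matvec_scl proj_scl //.
by rewrite invr_neq0 // tk_nz.
Qed.

Lemma delta_morph s : uniq s -> (0 < size s)%N -> is_P1_morphism (delta s).
Proof.
move=> us s0.
have [p [sp ep]] := form_Dc fst us; have [q [sq eq]] := form_Dc snd us.
exists (size s).-1, p, q; split => //.
  by move=> v v0; rewrite -ep -eq; exact: D_nz.
by move=> z; rewrite /delta /D ep eq.
Qed.

End Main.

Section Gen.
Variable F : closedFieldType.

Lemma hev10 d (p : {poly F}) : hev d p (1,0) = p`_d.
Proof.
rewrite /hev big_ord_recr /= subnn !expr0 expr1n !mulr1 big1 ?add0r // => i _.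
by rewrite expr0n subn_eq0 leqNgt ltn_ord /= mulr0.
Qed.

Lemma hev_t1 d (p : {poly F}) t : (size p <= d.+1)%N -> hev d p (t,1) = p.[t].
Proof.
move=> sp; rewrite (horner_coef_wide _ sp) /hev; apply: eq_bigr => i _ /=.
by rewrite expr1n mulr1.
Qed.

Lemma morph_fix (f : P1 F -> P1 F) : is_P1_morphism f -> exists z, f z = z.
Proof.
move=> [d [p [q [sp sq nz ef]]]].
case: (f None =P None) => [h|]; first by exists None.
rewrite ef /= hev10 hev10 /proj /=; case: eqP => // /eqP qd _.
have sq' : size q = d.+1.
  apply/eqP; rewrite eqn_leq sq /=; apply: contraR qd; rewrite -ltnNge ltnS => h.
  by rewrite nth_default.
have q0 : q != 0 by rewrite -size_poly_eq0 sq'.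
have sr : size ('X * q - p) = d.+2.
  rewrite size_polyDl mulrC size_mulX // ?sq' // size_polyN.
  by apply: leq_ltn_trans sp _.
have [t rt] : exists t, root ('X * q - p) t by apply/closed_rootP; rewrite sr.
move: rt; rewrite /root !hornerE subr_eq0 => /eqP ept.
exists (Some t); rewrite ef /= !hev_t1 // /proj /=.
case: eqP => [qt|/eqP qt].
  have := nz (t, 1); rewrite !hev_t1 // qt -ept qt mulr0 eqxx.
  by rewrite nzP /= oner_eq0 orbT => /(_ isT).
by rewrite -ept mulfK.
Qed.

End Gen.

Unset Implicit Arguments.

Theorem mainTheorem12 (F : closedFieldType) (charF0 : [pchar F] =i pred0)
    (H : seq 'M[F]_2) (HH : finite_subgroup_PGL2 H) (L : seq (P1 F)) :
  ((exists q, q \in L) /\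
   (forall A, A \in H -> forall q : P1 F, (mob A q \in L) = (q \in L)))
  <->
  (exists delta : P1 F -> P1 F,
     [/\ is_P1_morphism delta,
         (forall A, A \in H -> forall q : P1 F, delta (mob A q) = mob A (delta q)) &
         (forall q : P1 F, q \in L <-> delta q = q)]).
Proof.
have [uH _ _ _] := HH.
split.
- move=> [[q0 qL] hL].
  have us : uniq (undup L) := undup_uniq L.
  have s0 : (0 < size (undup L))%N.
    rewrite lt0n size_eq0; apply/eqP => e; move: qL; rewrite -mem_undup e.
    by rewrite in_nil.
  exists (delta (undup L)); split.
  + exact: delta_morph.
  + move=> A AH q; apply: delta_eqv => //; first exact: uH.
    by move=> q'; rewrite !mem_undup; exact: hL.
  + move=> q; rewrite -mem_undup; apply: iff_sym; exact: delta_fix.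
- move=> [delta [mD eqD fixD]]; split.
  + have [z hz] := morph_fix mD; exists z; exact/fixD.
  + move=> A AH q; have uA := uH A AH.
    apply/idP/idP => /fixD h; apply/fixD.
    * by apply: (mob_inj uA); rewrite -eqD.
    * by rewrite eqD // h.
Qed.
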